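(* Let $m\geq\beta\geq 1$ be integers and let $G^*$ be a graph with maximum $q$ among all graphs in $\mathfrak{G}_{m,\geq\beta}$. Let $X^*$ be a principal eigenvector of $Q(G^* )$ with coordinates $x^*_v$, let $M^*(G^* )=\{u_1v_1,\ldots,u_{\beta(G^* )}v_{\beta(G^* )}\}$ be a matching of $G^*$ extremal to $X^*$, and let $V^*=\{u_i,v_i : i=1,\ldots,\beta(G^* )\}$. Then $x^*_w\leq \min_{v\in V^*}x^*_v$ for every vertex $w\in V(G^* )\setminus V^*$.
   Context: All graphs are finite, simple and undirected (isolated vertices allowed). $Q(G)=D(G)+A(G)$ is the signless Laplacian matrix and $q(G)$ its largest eigenvalue; a principal eigenvector of $Q(G)$ is a nonnegative unit vector $X$ with $Q(G)X=q(G)X$. $\beta(G)$ is the matching number of $G$. $\mathfrak{G}_{m,\geq\beta}$ denotes the set of graphs with exactly $m$ edges and matching number at least $\beta$. For a graph $G$ with at least one edge and a principal eigenvector $X$ (coordinates $x_v$), a matching $M^*(G)$ of $G$ is said to be extremal to $X$ if it is a maximum matching (of size $\beta(G)$) and $\sum_{uv\in M^*(G)}(x_u+x_v)^2=\max_M\sum_{uv\in M}(x_u+x_v)^2$, the maximum taken over all maximum matchings $M$ of $G$. *)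

(* Defs.v *)
From HB Require Import structures.
From mathcomp Require Import all_boot all_order all_algebra.
From mathcomp Require Import reals.
Set Implicit Arguments. Unset Strict Implicit. Unset Printing Implicit Defensive.
Import Order.TTheory GRing.Theory Num.Theory.
Local Open Scope ring_scope.

(* A finite simple graph on vertex set 'I_n is given by its edge set:
   a set of 2-element subsets of 'I_n. Isolated vertices allowed. *)
Definition is_graph (n : nat) (E : {set {set 'I_n}}) : bool :=
  [forall e in E, #|e| == 2%N].

Definition nedges (n : nat) (E : {set {set 'I_n}}) : nat := #|E|.

Definition adj (n : nat) (E : {set {set 'I_n}}) (u v : 'I_n) : bool :=
  (u != v) && ([set u; v] \in E).

Definition deg (n : nat) (E : {set {set 'I_n}}) (v : 'I_n) : nat :=
  #|[set e in E | v \in e]|.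

Definition Qmx (R : numDomainType) (n : nat) (E : {set {set 'I_n}}) : 'M[R]_n :=
  \matrix_(i, j) ((deg E i)%:R * (i == j)%:R + (adj E i j)%:R).

Definition is_q (R : realType) (n : nat) (E : {set {set 'I_n}}) (r : R) : Prop :=
  eigenvalue (Qmx R E) r /\ (forall a : R, eigenvalue (Qmx R E) a -> a <= r).

Definition principal_eigvec (R : realType) (n : nat) (E : {set {set 'I_n}})
  (X : 'cV[R]_n) : Prop :=
  exists r : R, is_q E r /\ Qmx R E *m X = r *: X /\
    (forall i, 0 <= X i 0) /\ \sum_i (X i 0) ^+ 2 = 1.

Definition is_matching (n : nat) (E M : {set {set 'I_n}}) : bool :=
  (M \subset E) && trivIset M.

Definition matching_number (n : nat) (E : {set {set 'I_n}}) : nat :=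
  \max_(M : {set {set 'I_n}} | is_matching E M) #|M|.

Definition is_max_matching (n : nat) (E M : {set {set 'I_n}}) : bool :=
  is_matching E M && (#|M| == matching_number E).

Definition mweight (R : realType) (n : nat) (X : 'cV[R]_n) (M : {set {set 'I_n}}) : R :=
  \sum_(e in M) (\sum_(v in e) X v 0) ^+ 2.

Definition extremal_matching (R : realType) (n : nat) (E : {set {set 'I_n}})
  (X : 'cV[R]_n) (M : {set {set 'I_n}}) : Prop :=
  is_max_matching E M /\
  (forall M' : {set {set 'I_n}}, is_max_matching E M' -> mweight X M' <= mweight X M).

Definition in_class (m beta n : nat) (E : {set {set 'I_n}}) : bool :=
  [&& is_graph E, nedges E == m & beta <= matching_number E]%N.

(* Main.v *)
Require Import Defs.
From HB Require Import structures.
From mathcomp Require Import all_boot all_order all_algebra.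
From mathcomp Require Import reals.
From mathcomp Require Import complex spectral ring lra zify.
Set Implicit Arguments. Unset Strict Implicit. Unset Printing Implicit Defensive.
Import Order.TTheory GRing.Theory Num.Theory.
Local Open Scope ring_scope.

Definition form (R : numDomainType) n (A : 'M[R]_n) (x : 'cV[R]_n) : R :=
  \sum_i \sum_j x i 0 * A i j * x j 0.

Section Spec.
Local Open Scope sesquilinear_scope.
Variable R : realType.
Local Notation f := (real_complex R).

Lemma real_Re (x : R[i]) : x \is Num.real -> x = (complex.Re x)%:C%C.
Proof.
case: x => a b /= /orP[] H.
  by have := ger0_Im H => /= ->.
have : 0 <= - (a +i* b)%C by rewrite oppr_ge0.
by move/ger0_Im => /= /eqP; rewrite oppr_eq0 => /eqP ->.
Qed.

Lemma f_real (x : R) : f x \is Num.real.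
Proof. apply/CrealP. exact: (conjc_real x). Qed.


Lemma sum_helper n (P : 'M[R[i]]_n) (a c : 'I_n -> R[i]) :
  (forall i, (a i)^* = a i) ->
  \sum_i \sum_j a i * (\sum_k (P k i)^* * c k * P k j) * a j =
  \sum_k c k * ((\sum_i P k i * a i)^* * (\sum_j P k j * a j)).
Proof.
move=> ra.
have -> : \sum_k c k * ((\sum_i P k i * a i)^* * (\sum_j P k j * a j)) =
  \sum_k \sum_i \sum_j c k * ((P k i * a i)^* * (P k j * a j)).
  apply: eq_bigr => k _; rewrite rmorph_sum mulr_suml mulr_sumr.
  by apply: eq_bigr => i _; rewrite mulr_sumr mulr_sumr.
rewrite [RHS]exchange_big /=; apply: eq_bigr => i _.
rewrite [RHS]exchange_big /=; apply: eq_bigr => j _.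
rewrite mulr_sumr mulr_suml; apply: eq_bigr => k _.
rewrite rmorphM /= ra; ring.
Qed.

Lemma spec n (A : 'M[R]_n.+1) : A^T = A ->
  exists l, eigenvalue A l /\
    forall x : 'cV[R]_n.+1, form A x <= l * \sum_i x i 0 ^+ 2.
Proof.
move=> tA.
pose Ac := map_mx f A.
have Asym : Ac \is hermsymmx.
  apply: realsym_hermsym.
    apply/is_hermitianmxP; rewrite expr0 scale1r.
    by apply/matrixP => i j; rewrite !mxE -[in LHS]tA mxE.
  by apply/mxOverP => i j; rewrite mxE; exact: f_real.
have /orthomx_spectralP HA := hermitian_normalmx Asym.
have Pu : spectralmx Ac \is unitarymx := spectral_unitarymx Ac.
move: HA Pu; set P := spectralmx Ac; set d := spectral_diag Ac => HA Pu.
have PPt : P *m P^t* = 1%:M by apply/unitarymxP.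
have PtP : P^t* *m P = 1%:M by apply: mulmx1C.
rewrite (invmx_unitary Pu) in HA.
have dR : forall k, d 0 k = (complex.Re (d 0 k))%:C%C.
  move=> k; apply: real_Re; move/mxOverP: (hermitian_spectral_diag_real Asym); exact.
pose dr k := complex.Re (d 0 k).
have [i0 i0max] : exists i0, forall k, dr k <= dr i0.
  case: (@arg_maxP _ _ _ ord0 xpredT dr isT) => i0 _ Hm.
  by exists i0 => k; apply: Hm.
exists (dr i0); split.
  rewrite eigenvalue_root_char -(fmorph_root f) map_char_poly -/Ac.
  rewrite -eigenvalue_root_char; apply/eigenvalueP.
  pose e := (delta_mx 0 i0 : 'rV[R[i]]_n.+1).
  exists (e *m P).
    rewrite {1}HA !mulmxA -(mulmxA _ P) PPt mulmx1.
    have -> : e *m diag_mx d = d 0 i0 *: e.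
      apply/matrixP => a b; rewrite mul_mx_diag !mxE.
      by case: (b =P i0) => [->|]; rewrite ?andbT ?andbF ?mul0r ?mulr0 // mulrC.
    by rewrite -scalemxAl dR.
  apply/negP => /eqP H0.
  have : e *m P *m P^t* = 0 by rewrite H0 mul0mx.
  rewrite -mulmxA PPt mulmx1 => /matrixP /(_ 0 i0); rewrite !mxE !eqxx /=.
  by move/eqP; rewrite oner_eq0.
move=> x.
pose a i := f (x i 0).
have ra : forall i, (a i)^* = a i by move=> i; exact: conjc_real.
have Aij : forall i j, f (A i j) = \sum_k (P k i)^* * d 0 k * P k j.
  move=> i j; have := congr1 (fun M : 'M[R[i]]_n.+1 => M i j) HA; rewrite /= mxE => ->.
  rewrite mxE; apply: eq_bigr => k _; by rewrite mul_mx_diag !mxE.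
have Hid : forall i j, \sum_k (P k i)^* * 1 * P k j = (i == j)%:R.
  move=> i j; have := congr1 (fun M : 'M[R[i]]_n.+1 => M i j) PtP; rewrite !mxE => <-.
  by apply: eq_bigr => k _; rewrite mulr1 !mxE.
have E1 : f (form A x) = \sum_i \sum_j a i * (\sum_k (P k i)^* * d 0 k * P k j) * a j.
  rewrite /form rmorph_sum; apply: eq_bigr => i _; rewrite rmorph_sum.
  by apply: eq_bigr => j _; rewrite !rmorphM; congr (_ * _ * _); exact: Aij.
have E2 : f (\sum_i x i 0 ^+ 2) = \sum_i \sum_j a i * (\sum_k (P k i)^* * 1 * P k j) * a j.
  rewrite rmorph_sum; apply: eq_bigr => i _.
  rewrite (bigD1 i) //= Hid eqxx big1 ?addr0 ?mulr1 ?rmorphXn //.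
  by move=> j /negbTE Hj; rewrite Hid eq_sym Hj mulr0 mul0r.
rewrite sum_helper // in E1; rewrite sum_helper // in E2.
rewrite -lecR rmorphM /= E1 E2 mulr_sumr; apply: ler_sum => k _.
rewrite mul1r; apply: ler_wpM2r.
  rewrite [X in 0 <= X]mulrC; first [exact: (mulcJ_ge0 (\sum_j P k j * a j)) | exact: (mul_conjC_ge0 (\sum_j P k j * a j))].
by rewrite dR lecR; exact: i0max.
Qed.
End Spec.

Section G.
Variable R : realType.

Lemma sum_indic (T : finType) (A : {set T}) (b : pred T) :
  \sum_(e in A) ((b e)%:R : R) = (#|[set e in A | b e]|)%:R.
Proof.
rewrite -sum1dep_card natr_sum big_mkcondr /=.
by apply: eq_bigr => e _; case: (b e).
Qed.


Lemma coef_Q n (E : {set {set 'I_n}}) i j : is_graph E ->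
  ((deg E i)%:R * (i == j)%:R + (adj E i j)%:R : R) =
  (#|[set e in E | (i \in e) && (j \in e)]|)%:R.
Proof.
move=> gE; case: (eqVneq i j) => [<-|ij].
  rewrite /adj eqxx /= mulr1 addr0 /deg; congr (_%:R); apply: eq_card => e.
  by rewrite !inE andbb.
rewrite mulr0 add0r /adj ij /=; congr (_%:R).
have key : forall e, (e \in E) && ((i \in e) && (j \in e)) = (e \in E) && (e == [set i; j]).
  move=> e; case He: (e \in E) => //=.
  apply/andP/eqP => [[ie je]|->]; last by rewrite !inE !eqxx orbT.
  have /forallP /(_ e) /implyP /(_ He) /eqP e2 := gE.
  apply/eqP; rewrite eq_sym eqEcard subUset !sub1set ie je e2 cards2 ij //.
have -> : [set e in E | (i \in e) && (j \in e)] = E :&: [set [set i; j]].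
  by apply/setP => e; rewrite !inE key.
case H: ([set i; j] \in E).
  have -> : E :&: [set [set i; j]] = [set [set i; j]] by apply/setIidPr; rewrite sub1set.
  by rewrite cards1.
have -> : E :&: [set [set i; j]] = set0.
  by apply/setP => e; rewrite !inE; case: eqP => [->|]; rewrite ?H ?andbF.
by rewrite cards0.
Qed.

Lemma form_Q n (E : {set {set 'I_n}}) (x : 'cV[R]_n) : is_graph E ->
  form (Qmx R E) x = \sum_(e in E) (\sum_(v in e) x v 0) ^+ 2.
Proof.
move=> gE.
have -> : \sum_(e in E) (\sum_(v in e) x v 0) ^+ 2 =
   \sum_i \sum_j x i 0 * (#|[set e in E | (i \in e) && (j \in e)]|)%:R * x j 0.
  transitivity (\sum_(e in E) \sum_i \sum_j x i 0 * ((i \in e) && (j \in e))%:R * x j 0).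
    apply: eq_bigr => e _; rewrite expr2 (big_mkcond (fun v => v \in e)) mulr_suml /=.
    apply: eq_bigr => i _; rewrite big_mkcond mulr_sumr /=; apply: eq_bigr => j _.
    by case: (i \in e); case: (j \in e); rewrite /= ?mulr1 ?mulr0 ?mul0r.
  rewrite exchange_big /=; apply: eq_bigr => i _.
  rewrite exchange_big /=; apply: eq_bigr => j _.
  by rewrite -sum_indic mulr_sumr mulr_suml.
rewrite /form; apply: eq_bigr => i _; apply: eq_bigr => j _.
by rewrite mxE coef_Q.
Qed.

End G.

Section H.
Variable R : realType.

Lemma Qsym n (E : {set {set 'I_n}}) : (Qmx R E)^T = Qmx R E.
Proof.
apply/matrixP => i j; rewrite !mxE /adj eq_sym setUC.
by case: (eqVneq i j) => [->|]; rewrite ?mulr0.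
Qed.

Lemma sum_sq_pos n (v : 'rV[R]_n) : v != 0 -> 0 < \sum_j v 0 j ^+ 2.
Proof.
move=> v0; rewrite lt_def sumr_ge0 ?andbT; last by move=> j _; rewrite sqr_ge0.
apply/negP => /eqP /psumr_eq0P H; move/eqP: v0; apply; apply/matrixP => i j.
rewrite ord1 mxE; apply/eqP; rewrite -sqrf_eq0; apply/eqP; apply: H => //.
by move=> k _; rewrite sqr_ge0.
Qed.

Lemma isq_exists n (E : {set {set 'I_n.+1}}) : exists l, is_q E l /\
  forall x, form (Qmx R E) x <= l * \sum_i x i 0 ^+ 2.
Proof.
have [l [Hl Hx]] := spec (Qsym E).
exists l; split => //; split => // a /eigenvalueP [v Hv v0].
have Hf : form (Qmx R E) v^T = a * \sum_j v 0 j ^+ 2.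
  rewrite /form exchange_big mulr_sumr; apply: eq_bigr => j _.
  have := congr1 (fun M : 'rV[R]_n.+1 => M 0 j) Hv; rewrite !mxE => H.
  rewrite -mulr_suml (eq_bigr (fun i => v 0 i * Qmx R E i j)).
    by rewrite H expr2 mulrA.
  by move=> i _; rewrite mxE.
have := Hx v^T; rewrite Hf.
rewrite [X in _ <= l * X](eq_bigr (fun i => v 0 i ^+ 2)); last by move=> i _; rewrite mxE.
by rewrite ler_pM2r // sum_sq_pos.
Qed.

Lemma form_eig n (A : 'M[R]_n) (X : 'cV[R]_n) r :
  A *m X = r *: X -> form A X = r * \sum_i X i 0 ^+ 2.
Proof.
move=> H; rewrite /form mulr_sumr; apply: eq_bigr => i _.
have := congr1 (fun M : 'cV[R]_n => M i 0) H; rewrite !mxE => H'.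
rewrite (eq_bigr (fun j => X i 0 * (A i j * X j 0))); last by move=> j _; rewrite mulrA.
by rewrite -mulr_sumr H' expr2; ring.
Qed.

End H.

Section Main.
Variable R : realType.

Lemma two_set n (e : {set 'I_n}) v : #|e| = 2%N -> v \in e ->
  exists2 p, p != v & e = [set v; p].
Proof.
move/eqP/cards2P => [x [y [xy ->]]]; rewrite !inE => /orP [] /eqP ->.
  by exists y; rewrite // eq_sym.
by exists x; rewrite // setUC.
Qed.

Lemma sum_pair n (X : 'cV[R]_n) a b : a != b ->
  \sum_(u in [set a; b]) X u 0 = X a 0 + X b 0.
Proof.
by move=> ab; rewrite big_setU1 ?inE // big_set1.
Qed.

Lemma weight_swap n (X : 'cV[R]_n) (S : {set {set 'I_n}}) e f :
  e \in S -> f \notin S :\ e ->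
  mweight X (f |: (S :\ e)) + (\sum_(u in e) X u 0) ^+ 2 =
  mweight X S + (\sum_(u in f) X u 0) ^+ 2.
Proof.
move=> eS fS; rewrite /mweight big_setU1 //= [in RHS](big_setD1 e) //=.
by ring.
Qed.

Lemma card_swap n (S : {set {set 'I_n}}) e f :
  e \in S -> f \notin S :\ e -> #|f |: (S :\ e)| = #|S|.
Proof. by move=> eS fS; rewrite cardsU1 fS [in RHS](cardsD1 e) eS. Qed.

Lemma isq_exists_w n (E : {set {set 'I_n}}) (i : 'I_n) : exists l, is_q E l /\
  forall x, form (Qmx R E) x <= l * \sum_i x i 0 ^+ 2.
Proof. by case: n E i => [|n] E i; [case: i | exact: isq_exists]. Qed.

End Main.

Theorem lemma2p2 (R : realType) (m beta : nat) (n : nat)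
  (E : {set {set 'I_n}}) (qstar : R) (X : 'cV[R]_n) (M : {set {set 'I_n}}) :
  (1 <= beta)%N -> (beta <= m)%N ->
  in_class m beta E ->
  is_q E qstar ->
  (forall (n' : nat) (E' : {set {set 'I_n'}}) (r : R),
      in_class m beta E' -> is_q E' r -> r <= qstar) ->
  principal_eigvec E X ->
  extremal_matching E X M ->
  forall w : 'I_n, w \notin cover M ->
  forall v : 'I_n, v \in cover M -> X w 0 <= X v 0.
Proof.
move=> hb hbm hE hq hmax [r [hr [hQX [hX0 hX1]]]] [hMm hMext] w hw v hv.
have rq : r = qstar.
  by apply/le_anti; rewrite (hq.2 r hr.1) (hr.2 qstar hq.1).
move: hE => /and3P [gE /eqP hm hbeta].
have formX : form (Qmx R E) X = qstar by rewrite (form_eig hQX) hX1 mulr1 rq.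
move: (hMm) => /andP [/andP [hME hMt] /eqP hMc].
have [e eM ve] : exists2 e, e \in M & v \in e by apply/bigcupP.
have eE : e \in E by apply: (subsetP hME).
have e2 : #|e| = 2%N by move/forallP/(_ e)/implyP/(_ eE)/eqP: gE.
have [p pv ee] := two_set e2 ve.
have wnot : forall f, f \in M -> w \notin f.
  by move=> f fM; apply/negP => wf; move/negP: hw; apply; apply/bigcupP; exists f.
have we : w \notin e := wnot e eM.
have wv : w != v by apply: contraNneq we => ->.
have wp : w != p by apply: contraNneq we => ->; rewrite ee !inE eqxx orbT.
rewrite leNgt; apply/negP => hlt.
have hsq : (X v 0 + X p 0) ^+ 2 < (X w 0 + X p 0) ^+ 2.
  have := hX0 v; have := hX0 p; nra.
pose f := [set w; p].
have fnot : f \notin M :\ e.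
  apply/negP => /setD1P [_ fM]; move: (wnot f fM); rewrite !inE eqxx.
  by [].
pose M' := f |: (M :\ e).
have cM' : #|M'| = #|M| by apply: card_swap.
have tM' : trivIset M'.
  have [] // := @trivIsetU1 _ f (M :\ e).
  - move=> B /setD1P [Be BM]; rewrite -setI_eq0; apply/eqP/setP => u.
    rewrite !inE; apply/negP => /andP [/orP [] /eqP -> uB].
      by move: (wnot B BM); rewrite uB.
    have /trivIsetP /(_ e B eM BM) := hMt.
    rewrite eq_sym Be => /(_ isT) /disjoint_setI0 /setP /(_ p).
    by rewrite !inE ee !inE eqxx orbT uB.
  - by apply: trivIsetS hMt; apply: subsetDl.
  - apply/negP => /setD1P [_ /(subsetP hME) s0].
    by move/forallP/(_ set0)/implyP/(_ s0): gE; rewrite cards0.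
have wM : mweight X M' + (X v 0 + X p 0) ^+ 2 = mweight X M + (X w 0 + X p 0) ^+ 2.
  have vp : v != p by rewrite eq_sym.
  by rewrite -(sum_pair X wp) -(sum_pair X vp) -ee; apply: weight_swap.
have vp : v != p by rewrite eq_sym.
have sf : \sum_(u in f) X u 0 = X w 0 + X p 0 by apply: sum_pair.
have se : \sum_(u in e) X u 0 = X v 0 + X p 0 by rewrite ee; apply: sum_pair.
case fE: (f \in E).
  have mM' : is_max_matching E M'.
    apply/andP; split; last by rewrite cM' hMc.
    apply/andP; split => //.
    apply/subsetP => B; rewrite !inE => /orP [/eqP -> // | /andP [_ BM]].
    exact: (subsetP hME).
  have := hMext M' mM'; lra.
pose E' := f |: (E :\ e).
have fnotE : f \notin E :\ e by rewrite !inE fE andbF.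
have gE' : is_graph E'.
  apply/forallP => B; apply/implyP; rewrite !inE => /orP [/eqP -> | /andP [_ BE]].
    by rewrite cards2 wp.
  by move/forallP/(_ B)/implyP/(_ BE): gE.
have nE' : nedges E' = m by rewrite /nedges card_swap.
have mE' : is_matching E' M'.
  apply/andP; split => //.
  apply/subsetP => B; rewrite !inE => /orP [/eqP -> | /andP [Be BM]].
    by rewrite eqxx.
  by rewrite Be (subsetP hME B BM) orbT.
have bE' : (beta <= matching_number E')%N.
  apply: leq_trans hbeta _; rewrite -hMc -cM'; exact: leq_bigmax_cond.
have hclass : in_class m beta E' by rewrite /in_class gE' nE' eqxx bE'.
have [l [hl Hl]] := @isq_exists_w R _ E' w.
have := hmax _ E' l hclass hl.
have := Hl X; rewrite hX1 mulr1 form_Q // -/(mweight X E').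
have := weight_swap X eE fnotE; rewrite -/E' sf se.
move: formX; rewrite form_Q // -/(mweight X E) => formX.
lra.
Qed.
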